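(* Let $\circ$ be a binary operation on $L$ and consider: (C1) $a\circ b=a\vee b$ for all $a,b\in L^+$; (C2) $a\circ(-a)=\mathbb{O}$ for all $a\in L$; (C3) $-(a\circ b)=(-a)\circ(-b)$ for all $a,b\in L$; (C3+) $-(a\circ b)=(-a)\circ(-b)$ for all $a,b\in L^+$. Then: (0) if $\circ$ satisfies (C1) and (C2), then $\circ$ is not associative; (1) if $\circ$ satisfies (C1), (C2), (C3), then there is no such $\circ$ for which the set $A(\circ)=\{(a,b,c)\in L^3:(a\circ b)\circ c=a\circ(b\circ c)\}$ strictly contains $A(\oplus)$, where $\oplus$ is the symmetric maximum; (2) if $\circ$ satisfies (C1) and (C3+), then $\mathbb{O}$ is a neutral element of $\circ$; if moreover $\circ$ is associative then $|a\circ(-a)|\ge|a|$ for all $a\in L$; and if moreover $\circ$ is isotone then $|a\circ(-a)|=|a|$.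
   Context: Let $(L^+,\le)$ be a totally ordered set with bottom $\mathbb{O}$ and top $\mathbb{1}\neq\mathbb{O}$. Let $L^-=\{-a:a\in L^+\}$ be a disjoint copy of $L^+$ with reversed order ($-a\le-b$ iff $b\le a$), and $L=L^+\cup L^-$ with $-\mathbb{O}$ identified with $\mathbb{O}$, totally ordered so that every element of $L^-$ lies below every element of $L^+$; $-(-a)=a$; $|a|=a$ for $a\in L^+$, $|a|=-a$ otherwise. The symmetric maximum is $a\oplus b=\mathbb{O}$ if $b=-a$, and otherwise the one of $a,b$ with larger absolute value. Isotone means $a\le a'$, $b\le b'$ imply $a\circ b\le a'\circ b'$. *)

(* Defs.v *)
From HB Require Import structures.
From mathcomp Require Import all_boot all_order.
Set Implicit Arguments. Unset Strict Implicit. Unset Printing Implicit Defensive.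
Import Order.TTheory.
Local Open Scope order_scope.

(* L^+ is a totally ordered set T with bottom \bot (= 𝕆) and top \top (= 𝟙).
   L = L^+ ∪ L^- is represented by pairs (s, a) : bool * T, where s = true
   means "negative", subject to the normalization that -𝕆 = 𝕆, i.e. the
   pair (true, \bot) is excluded. *)
Section SymL.
Context {d : Order.disp_t} {T : tbOrderType d}.

Definition symL := {x : bool * T | ~~ x.1 || (x.2 != \bot)}.

Lemma mk_proof (s : bool) (a : T) :
  ~~ (s && (a != \bot), a).1 || ((s && (a != \bot), a).2 != \bot).
Proof. by case: s; case: (a != \bot). Qed.

Definition mk (s : bool) (a : T) : symL := exist _ (s && (a != \bot), a) (mk_proof s a).

Definition posL (a : T) : symL := mk false a.

Definition zeroL : symL := posL \bot.

Definition oppL (x : symL) : symL := mk (~~ (val x).1) (val x).2.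

Definition absL (x : symL) : T := (val x).2.

Definition leL (x y : symL) : bool :=
  match (val x).1, (val y).1 with
  | false, false => (val x).2 <= (val y).2
  | true, true => (val y).2 <= (val x).2
  | true, false => true
  | false, true => false
  end.

Definition smax (x y : symL) : symL :=
  if y == oppL x then zeroL
  else if absL x < absL y then y else x.

Definition C1 (o : symL -> symL -> symL) : Prop :=
  forall a b : T, o (posL a) (posL b) = posL (Order.max a b).
Definition C2 (o : symL -> symL -> symL) : Prop :=
  forall a : symL, o a (oppL a) = zeroL.
Definition C3 (o : symL -> symL -> symL) : Prop :=
  forall a b : symL, oppL (o a b) = o (oppL a) (oppL b).
Definition C3plus (o : symL -> symL -> symL) : Prop :=
  forall a b : T, oppL (o (posL a) (posL b)) = o (oppL (posL a)) (oppL (posL b)).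

Definition associative_op (o : symL -> symL -> symL) : Prop :=
  forall a b c : symL, o (o a b) c = o a (o b c).

Definition isotone_op (o : symL -> symL -> symL) : Prop :=
  forall a a' b b' : symL, leL a a' -> leL b b' -> leL (o a b) (o a' b').

Definition assoc_triples (o : symL -> symL -> symL) (t : symL * symL * symL) : Prop :=
  o (o t.1.1 t.1.2) t.2 = o t.1.1 (o t.1.2 t.2).

Definition strictly_contains_smax_triples (o : symL -> symL -> symL) : Prop :=
  (forall t, assoc_triples smax t -> assoc_triples o t) /\
  (exists t, assoc_triples o t /\ ~ assoc_triples smax t).

Definition neutral_elem (o : symL -> symL -> symL) (e : symL) : Prop :=
  forall a : symL, o e a = a /\ o a e = a.

End SymL.

(* Main.v *)
Require Import Defs.
From HB Require Import structures.
From mathcomp Require Import all_ssreflect all_order.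
Import Order.TTheory.
Local Open Scope order_scope.
Section H.
Context {d : Order.disp_t} {T : tbOrderType d}.
Local Notation L := (@symL d T).
Local Notation N a := (oppL (posL a)).

Lemma absP (a : T) : absL (posL a) = a. Proof. by []. Qed.
Lemma absN (a : T) : absL (N a) = a. Proof. by []. Qed.

Lemma oppK (x : L) : oppL (oppL x) = x.
Proof.
case: x => [[s a] p]; apply: val_inj => /=.
case: s p => /= p; first by rewrite p.
by case: (a != \bot).
Qed.

Lemma Nbot : N (\bot : T) = zeroL.
Proof. by apply: val_inj; rewrite /= eqxx. Qed.

Lemma decomp (x : L) : x = posL (absL x) \/ x = N (absL x).
Proof.
case: x => [[s a] p]; case: s p => /= p; [right|left]; apply: val_inj => //=.
by rewrite p.
Qed.

Lemma posL_inj (a b : T) : posL a = posL b -> a = b.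
Proof. by move/(congr1 absL). Qed.

Lemma valN (a : T) : val (N a) = (a != \bot, a). Proof. by []. Qed.
Lemma valP (a : T) : val (posL a) = (false, a). Proof. by []. Qed.

Lemma maxC' (a b : T) : Order.max a b = Order.max b a.
Proof. exact: maxC. Qed.

Lemma smax_pp (a b : T) : smax (posL a) (posL b) = posL (Order.max a b).
Proof.
rewrite /smax; case: eqP => [/(congr1 val)|_].
  rewrite valP valN => -[/esym/negbFE/eqP -> ->]; by rewrite maxxx.
rewrite !absP; case: (ltP a b) => h.
  by [].
by [].
Qed.

Lemma smax_nn (a b : T) : smax (N a) (N b) = N (Order.max a b).
Proof.
rewrite /smax; case: eqP => [|_].
  rewrite oppK => /(congr1 val); rewrite valN valP => -[/negbFE/eqP -> <-].
  by rewrite maxxx Nbot.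
rewrite !absN; case: (ltP a b) => h.
  by [].
by [].
Qed.

Lemma smax_pn (a : T) : smax (posL a) (N a) = zeroL.
Proof. by rewrite /smax eqxx. Qed.
Lemma smax_np (a : T) : smax (N a) (posL a) = zeroL.
Proof. by rewrite /smax oppK eqxx. Qed.

Lemma smax_pn_gt (a b : T) : b < a -> smax (posL a) (N b) = posL a.
Proof.
move=> h; rewrite /smax; case: eqP => [/(congr1 absL)|_].
  by rewrite !absN => E; move: h; rewrite E ltxx.
by rewrite absP absN ltNge (ltW h).
Qed.
Lemma smax_np_gt (a b : T) : b < a -> smax (N b) (posL a) = posL a.
Proof.
move=> h; rewrite /smax; case: eqP => [/(congr1 absL)|_].
  by rewrite oppK !absP => E; move: h; rewrite E ltxx.
by rewrite absP absN h.
Qed.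
Lemma smax_np_lt (a b : T) : b < a -> smax (N a) (posL b) = N a.
Proof.
move=> h; rewrite /smax; case: eqP => [/(congr1 absL)|_].
  by rewrite oppK !absP => E; move: h; rewrite E ltxx.
by rewrite absP absN ltNge (ltW h).
Qed.
Lemma smax_pn_lt (a b : T) : b < a -> smax (posL b) (N a) = N a.
Proof.
move=> h; rewrite /smax; case: eqP => [/(congr1 absL)|_].
  by rewrite !absN => E; move: h; rewrite E ltxx.
by rewrite absP absN h.
Qed.

Lemma maxbx (a : T) : Order.max \bot a = a. Proof. exact: max_r (le0x a). Qed.
Lemma maxxb (a : T) : Order.max a \bot = a. Proof. exact: max_l (le0x a). Qed.

Section Op.
Variable o : L -> L -> L.

Lemma op_nn : C1 o -> C3plus o -> forall a b, o (N a) (N b) = N (Order.max a b).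
Proof. by move=> h1 h3 a b; rewrite -h3 h1. Qed.

Lemma part1_eq : C1 o -> C2 o -> C3 o ->
  (forall t, assoc_triples smax t -> assoc_triples o t) -> forall x y, o x y = smax x y.
Proof.
move=> h1 h2 h3 hA.
have h3p : C3plus o by move=> a b; exact: h3.
have pp a b : o (posL a) (posL b) = posL (Order.max a b) by exact: h1.
have nn := op_nn h1 h3p.
have pn a : o (posL a) (N a) = zeroL by exact: h2.
have np a : o (N a) (posL a) = zeroL by have := h2 (N a); rewrite oppK.
have npg x y : y < x -> o (N y) (posL x) = posL x.
  move=> h; have := hA (N y, posL y, posL x); rewrite /assoc_triples /=.
  rewrite smax_np smax_pp (max_r (ltW h)) smax_np_gt // /zeroL smax_pp maxbx.
  rewrite np pp (max_r (ltW h)) /zeroL pp maxbx => E; by rewrite -E.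
have png x y : y < x -> o (posL x) (N y) = posL x.
  move=> h; have := hA (posL x, posL y, N y); rewrite /assoc_triples /=.
  rewrite smax_pn smax_pp (max_l (ltW h)) smax_pn_gt // /zeroL smax_pp maxxb.
  rewrite pn pp (max_l (ltW h)) /zeroL pp maxxb => E; by rewrite E.
have npl x y : y < x -> o (N x) (posL y) = N x.
  by move=> h; rewrite -[posL y]oppK -h3 png.
have pnl x y : y < x -> o (posL y) (N x) = N x.
  by move=> h; rewrite -[posL y]oppK -h3 npg.
move=> u v; case: (decomp u) => ->; case: (decomp v) => ->;
  set a := absL u; set b := absL v; case: (ltgtP a b) => h.
- by rewrite pp smax_pp.
- by rewrite pp smax_pp.
- by rewrite pp smax_pp.
- by rewrite pnl // smax_pn_lt.
- by rewrite png // smax_pn_gt.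
- by rewrite h pn smax_pn.
- by rewrite npg // smax_np_gt.
- by rewrite npl // smax_np_lt.
- by rewrite h np smax_np.
- by rewrite nn smax_nn.
- by rewrite nn smax_nn.
- by rewrite nn smax_nn.
Qed.

Lemma bound (e : T) (c : L) : e != \bot -> leL (N e) c -> leL c (posL e) -> absL c <= e.
Proof.
move=> he; case: c => [[[] f] p]; rewrite /leL /absL /= ?he //.
Qed.

Lemma leL_refl (c : L) : leL c c.
Proof. by case: c => [[[] f] p]; rewrite /leL /=. Qed.

Lemma part2_neutral : C1 o -> C3plus o -> neutral_elem o zeroL.
Proof.
move=> h1 h3 a; have nn := op_nn h1 h3.
case: (decomp a) => ->.
  by rewrite /zeroL !h1 maxbx maxxb.
by rewrite -Nbot !nn maxbx maxxb.
Qed.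

Lemma part2_assoc : C1 o -> C3plus o -> associative_op o ->
  forall a, absL a <= absL (o a (oppL a)).
Proof.
move=> h1 h3 hA a; have nn := op_nn h1 h3.
have pp a' b : o (posL a') (posL b) = posL (Order.max a' b) by exact: h1.
case: (decomp a) => ->; set e := absL a; rewrite ?oppK.
- set c := o (posL e) (N e).
  have E1 : c = o (posL e) c by rewrite /c -hA pp maxxx.
  have E2 : c = o c (N e) by rewrite /c hA nn maxxx.
  case: (decomp c) => Ec.
    by rewrite E1 Ec pp absP le_max lexx.
  by rewrite E2 Ec nn absN le_max lexx orbT.
- set c := o (N e) (posL e).
  have E1 : c = o (N e) c by rewrite /c -hA nn maxxx.
  have E2 : c = o c (posL e) by rewrite /c hA pp maxxx.
  case: (decomp c) => Ec.
    by rewrite E2 Ec pp absP le_max lexx orbT.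
  by rewrite E1 Ec nn absN le_max lexx.
Qed.

Lemma part2_iso : C1 o -> C3plus o -> isotone_op o ->
  forall a, absL (o a (oppL a)) <= absL a.
Proof.
move=> h1 h3 hI a; have nn := op_nn h1 h3.
have pp a' b : o (posL a') (posL b) = posL (Order.max a' b) by exact: h1.
have Nlp (e : T) : e != \bot -> leL (N e) (posL e) by move=> he; rewrite /leL /= he.
case: (decomp a) => ->; set e := absL a; rewrite ?oppK.
- case: (eqVneq e \bot) => he.
    by rewrite he Nbot /zeroL pp maxxx.
  rewrite absP; apply: bound => //.
    by have := hI _ _ _ _ (Nlp e he) (leL_refl (N e)); rewrite nn maxxx.
  by have := hI _ _ _ _ (leL_refl (posL e)) (Nlp e he); rewrite pp maxxx.
- case: (eqVneq e \bot) => he.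
    by rewrite he Nbot /zeroL pp maxxx.
  rewrite absN; apply: bound => //.
    by have := hI _ _ _ _ (leL_refl (N e)) (Nlp e he); rewrite nn maxxx.
  by have := hI _ _ _ _ (Nlp e he) (leL_refl (posL e)); rewrite pp maxxx.
Qed.
End Op.
End H.
Theorem proposition2 (d : Order.disp_t) (T : tbOrderType d)
  (hbt : (\bot : T) != \top) :
  (* (0) *)
  (forall o : @symL d T -> @symL d T -> @symL d T, C1 o -> C2 o -> ~ associative_op o) /\
  (* (1) *)
  (forall o : @symL d T -> @symL d T -> @symL d T, C1 o -> C2 o -> C3 o ->
     ~ strictly_contains_smax_triples o) /\
  (* (2) *)
  (forall o : @symL d T -> @symL d T -> @symL d T, C1 o -> C3plus o ->
     neutral_elem o (zeroL (T := T)) /\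
     (associative_op o ->
        (forall a : @symL d T, absL a <= absL (o a (oppL a))) /\
        (isotone_op o -> forall a : @symL d T, absL (o a (oppL a)) = absL a))).
Proof.
split.
  move=> o h1 h2 hA.
  have E := hA (posL \top) (posL \top) (oppL (posL \top)).
  rewrite h1 maxxx h2 /zeroL h1 maxxb in E.
  by move: hbt; rewrite (posL_inj _ _ E) eqxx.
split.
  move=> o h1 h2 h3 [hs [t [ho hn]]]; apply: hn.
  have eq := @part1_eq _ _ o h1 h2 h3 hs.
  by move: ho; rewrite /assoc_triples !eq.
move=> o h1 h3; split; first exact: (@part2_neutral _ _ o).
move=> hA; split; first exact: (@part2_assoc _ _ o).
move=> hI a; apply/le_anti; rewrite (@part2_iso _ _ o) // (@part2_assoc _ _ o) //.
Qed.
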